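(* Let $(J,\preccurlyeq)$ be a finite upper semilattice and $F\subseteq K_J$ a subfunctor of the constant functor. Let $A:=\mathrm{supp}(\beta^0F)$ (the set of minimal elements of $\{a\in J\mid F(a)\neq0\}$) and fix a total order $<$ on $A$. Define the global Koszul complex $\mathcal K F$ by \[ (\mathcal K F)_d:=\bigoplus_{S\subseteq A,\ |S|=d+1} K\big(\textstyle\bigvee S,-\big)\qquad (d\geq 0), \] with differential $\partial=\sum_{i=0}^{d+1}(-1)^i\partial_i\colon(\mathcal K F)_{d+1}\to(\mathcal K F)_d$, where $\partial_i$ maps the summand $K(\bigvee S,-)$ indexed by $S=\{s_0<\cdots<s_{d+1}\}$ to the summand $K(\bigvee(S\setminus\{s_i\}),-)$ via the inclusion $K(\bigvee S,-)\subseteq K(\bigvee(S\setminus\{s_i\}),-)$, and with augmentation $\partial\colon(\mathcal K F)_0=\bigoplus_{s\in A}K(s,-)\to F$ given on the summand $K(s,-)$ by the inclusion $K(s,-)\subseteq F$. Then $\cdots\to(\mathcal KF)_1\to(\mathcal KF)_0\to F\to 0$ is a free resolution of $F$ (i.e.\ it is exact, and each $(\mathcal KF)_d$ is a direct sum of functors $K(b,-)$).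
   Context: $K$ is a field and $\mathrm{vect}_K$ the category of finite-dimensional $K$-vector spaces. $K_J\colon J\to\mathrm{vect}_K$ is the constant functor with value $K$ and identity transition maps. For $a\in J$, $K(a,-)\subseteq K_J$ is the subfunctor with $K(a,b)=K$ if $a\preccurlyeq b$ and $0$ otherwise. Subfunctors of $K_J$ correspond to upsets (their supports $\{a\mid F(a)\neq 0\}$), and $\mathrm{supp}(\beta^0F)$, the support of the $0$-th Betti diagram (degrees of generators of a minimal projective cover), equals the set of minimal elements of the support of $F$. An upper semilattice is a poset in which every nonempty subset $S$ has a join $\bigvee S$. *)

(* Defs.v *)
From HB Require Import structures.
From mathcomp Require Import all_boot all_order all_algebra.
Set Implicit Arguments. Unset Strict Implicit. Unset Printing Implicit Defensive.
Import Order.TTheory GRing.Theory Num.Theory.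
Local Open Scope ring_scope.

(* A functor J -> vect_K that is a subfunctor of the constant functor K_J is
   given pointwise by subspaces F a of K (viewed as K^o, the regular K-vector
   space), compatible with the identity transition maps. *)
Section Koszul.
Variables (dsp : Order.disp_t) (J : finJoinSemilatticeType dsp) (K : fieldType).
Variable F : J -> {vspace K^o}.

Definition is_subfunctor_const : Prop :=
  forall a b : J, (a <= b)%O -> (F a <= F b)%VS.

Definition minsupp : {set J} :=
  [set a | (F a != 0%VS) && [forall c, (c < a)%O ==> (F c == 0%VS)]].

Definition bigjoin (S : {set J}) : option J :=
  omap (fun x0 => \big[Order.join/x0]_(x in S) x) [pick x in S].

(* K(\/S, b) <> 0, i.e. \/S <= b. *)
Definition join_le (S : {set J}) (b : J) : bool :=
  if bigjoin S is Some j then (j <= b)%O else false.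

(* a total order lt on A; kidx S s = position i of s in S = {s_0 < ... } *)
Variable lt : rel J.
Definition kidx (S : {set J}) (s : J) : nat := #|[set t in S | lt t s]|.

(* (KF)_n evaluated at b = \bigoplus_{S \subseteq A, |S| = n+1} K(\/S, b):
   functions c indexed by subsets S, supported on the S with S \subseteq A,
   |S| = n+1 and \/S <= b (the summands with K(\/S,b) = K). *)
Definition kchain (n : nat) (b : J) (c : {ffun {set J} -> K}) : bool :=
  [forall S, (c S != 0) ==>
     [&& S \subset minsupp, #|S| == n.+1 & join_le S b]].

(* differential sum_i (-1)^i d_i, the d_i being inclusions (identities on
   the nonzero summands): the T-component collects the contributions of all
   S = T u {s}, s = s_i with i = kidx S s. *)
Definition kdiff (c : {ffun {set J} -> K}) : {ffun {set J} -> K} :=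
  [ffun T => \sum_(s in minsupp :\: T) (-1) ^+ kidx (s |: T) s * c (s |: T)].

Definition kaug (c : {ffun {set J} -> K}) : K := \sum_(s in minsupp) c [set s].

End Koszul.

(* Main.v *)
Require Import Defs.
From HB Require Import structures.
From mathcomp Require Import all_boot all_order all_algebra ring.
Import Order.TTheory GRing.Theory Num.Theory.
Set Implicit Arguments. Unset Strict Implicit. Unset Printing Implicit Defensive.
Local Open Scope ring_scope.

Section K.
Variables (dsp : Order.disp_t) (J : finJoinSemilatticeType dsp) (K : fieldType).
Variable F : J -> {vspace K^o}.
Variable lt : rel J.

Lemma bigjoin_le (b x0 : J) (r : seq J) (P : pred J) :
  ((\big[Order.join/x0]_(x <- r | P x) x) <= b)%O =
  (x0 <= b)%O && all (fun x => P x ==> (x <= b)%O) r.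
Proof.
elim: r => [|y r IH]; first by rewrite big_nil andbT.
rewrite big_cons /=; case: (P y) => /=; last by rewrite IH.
by rewrite leUx IH andbCA.
Qed.

Lemma join_leE (S : {set J}) (b : J) :
  join_le S b = (S != set0) && [forall x in S, (x <= b)%O].
Proof.
rewrite /join_le /bigjoin; case: pickP => [x0 Hx0 | H0] /=.
  rewrite bigjoin_le.
  have -> : S != set0 by apply/set0Pn; exists x0.
  apply/andP/forallP => [[_ /allP H] x | H]; last first.
    split; first by have := H x0; rewrite Hx0.
    by apply/allP => x _; apply/implyP => Hx; have := H x; rewrite Hx.
  by apply/implyP => Hx; have /implyP := H x (mem_index_enum x); apply.
have -> : S = set0 by apply/setP => x; rewrite inE H0.
by rewrite eqxx.
Qed.

Lemma exists_min (T : finType) (P : pred T) (R : rel T) :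
  {in P, forall x, ~~ R x x} ->
  {in P & P & P, forall x y z, R x y -> R y z -> R x z} ->
  forall x0, P x0 -> exists2 v, P v & forall u, P u -> ~~ R u v.
Proof.
move=> Hirr Htr x0 Px0.
case: (arg_minnP (fun v => #|[set t | P t && R t v]|) Px0) => v Pv Hmin.
exists v => // u Pu; apply/negP => Ruv.
have := Hmin u Pu; apply/negP; rewrite -ltnNge; apply: proper_card.
apply/properP; split.
  by apply/subsetP => t; rewrite !inE => /andP[Pt Rtu]; rewrite Pt (Htr t u v).
by exists u; rewrite !inE ?Pu ?Ruv // (negbTE (Hirr u Pu)) andbF.
Qed.

Lemma full_of_nz (U : {vspace K^o}) : U != 0%VS -> forall y : K^o, y \in U.
Proof.
move=> HU y; set v := vpick U.
have Hv : v != 0 by rewrite vpick0.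
have -> : y = (y / v) *: v by rewrite /GRing.scale /= mulfVK.
by rewrite memvZ // memv_pick.
Qed.

Lemma kidxU1 (x : J) (X : {set J}) (y : J) :
  x \notin X -> kidx lt (x |: X) y = (lt x y + kidx lt X y)%N.
Proof.
move=> Hx; rewrite /kidx; case Hxy: (lt x y).
  have -> : [set t in x |: X | lt t y] = x |: [set t in X | lt t y].
    by apply/setP=> t; rewrite !inE; case: (eqVneq t x) => [->|].
  by rewrite cardsU1 inE (negbTE Hx).
have -> : [set t in x |: X | lt t y] = [set t in X | lt t y].
  by apply/setP=> t; rewrite !inE; case: (eqVneq t x) => [->|]; rewrite ?Hxy ?(negbTE Hx) ?andbF.
by [].
Qed.

Lemma kidx0 (X : {set J}) (y : J) :
  (forall u, u \in X -> ~~ lt u y) -> kidx lt X y = 0%N.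
Proof.
move=> H; apply/eqP; rewrite cards_eq0; apply/eqP/setP => t; rewrite !inE.
by apply/negP => /andP[/H /negP].
Qed.

Notation A := (minsupp F).
Definition Ab (b : J) := [set a in A | (a <= b)%O].

Lemma kchainP n b c :
  kchain F n b c <-> (forall S, c S != 0 -> S \subset Ab b /\ #|S| = n.+1).
Proof.
split.
  move=> /forallP H S HS; have /implyP /(_ HS) /and3P[SA /eqP Sc Sj] := H S.
  split=> //; move: Sj; rewrite join_leE => /andP[_ /forallP Hb].
  apply/subsetP => x Hx; rewrite inE (subsetP SA x Hx).
  by have /implyP := Hb x; apply.
move=> H; apply/forallP => S; apply/implyP => HS.
have [/subsetP Sb Sc] := H S HS.
rewrite Sc eqxx /= join_leE -card_gt0 Sc /=.
apply/andP; split.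
  by apply/subsetP => x /Sb; rewrite inE => /andP[].
by apply/forallP => x; apply/implyP => /Sb; rewrite inE => /andP[].
Qed.


Hypothesis Hsub : is_subfunctor_const F.
Hypothesis Hirr : {in A, forall x, ~~ lt x x}.
Hypothesis Htr : {in A & A & A, forall x y z, lt x y -> lt y z -> lt x z}.
Hypothesis Htot : {in A &, forall x y, x != y -> lt x y || lt y x}.

Lemma AbA b x : x \in Ab b -> x \in A.
Proof. by rewrite inE => /andP[]. Qed.

Lemma asym x y : x \in A -> y \in A -> lt x y -> ~~ lt y x.
Proof.
move=> xA yA xy; apply/negP => yx.
by have := Hirr xA; rewrite (Htr xA yA xA xy yx).
Qed.

Lemma part1 n b b' c : (b <= b')%O -> kchain F n b c -> kchain F n b' c.
Proof.
move=> bb' /kchainP H; apply/kchainP => S /H [Sb Sc]; split=> //.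
apply: subset_trans Sb _; apply/subsetP => x; rewrite !inE => /andP[-> xb].
exact: le_trans xb bb'.
Qed.

Lemma part2 n b c : kchain F n.+1 b c -> kchain F n b (kdiff F lt c).
Proof.
move/kchainP => H; apply/kchainP => T; rewrite ffunE => HT.
have [s Hs Hc]: exists2 s, s \in A :\: T & c (s |: T) != 0.
  case: (pickP [pred s | (s \in A :\: T) && (c (s |: T) != 0)]) => [s /andP[]|H0].
    by exists s.
  move: HT; rewrite big1 ?eqxx // => s Hs; have := H0 s.
  by rewrite /= Hs /= => /negbFE/eqP ->; rewrite mulr0.
have [Sb Sc] := H _ Hc; move: Hs; rewrite inE => /andP[HsT _].
split; first by apply: subset_trans Sb; apply: subsetUr.
by move: Sc; rewrite cardsU1 HsT add1n => [[]].
Qed.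

Lemma part3 b c : kchain F 0 b c -> (kaug F c : K^o) \in F b.
Proof.
move/kchainP => H; rewrite /kaug; apply: rpred_sum => s Hs.
case: (eqVneq (c [set s]) 0) => [->|Hc]; first by rewrite rpred0.
apply: full_of_nz.
have [/subsetP Sb _] := H _ Hc.
have := Sb s (set11 s); rewrite inE => /andP[sA sb].
move: sA; rewrite /minsupp inE => /andP[Fs _].
apply/negP => /eqP Fb0; have := Hsub sb; rewrite Fb0 subv0 => /eqP Fs0.
by rewrite Fs0 eqxx in Fs.
Qed.

Lemma pair_sum0 (D : {set J}) (g : J -> J -> K) :
  D \subset A ->
  {in D &, forall s t, s != t -> g t s = - g s t} ->
  \sum_(s in D) \sum_(t in D) (if t != s then g s t else 0) = 0.
Proof.
move=> /subsetP DA Hanti.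
have E : forall s t, s \in D -> t \in D ->
   (if t != s then g s t else 0) =
   (if lt s t then g s t else 0) + (if lt t s then g s t else 0).
  move=> s t sD tD; case: (eqVneq t s) => [->|ts].
    by rewrite (negbTE (Hirr (DA _ sD))) addr0.
  have := Htot (DA _ sD) (DA _ tD); rewrite eq_sym => /(_ ts) /orP[st|st].
    by rewrite st (negbTE (asym (DA _ sD) (DA _ tD) st)) addr0.
  by rewrite st (negbTE (asym (DA _ tD) (DA _ sD) st)) add0r.
transitivity (\sum_(s in D) \sum_(t in D) (if lt s t then g s t else 0) +
              \sum_(s in D) \sum_(t in D) (if lt t s then g s t else 0)).
  rewrite -big_split; apply: eq_bigr => s sD; rewrite -big_split.
  by apply: eq_bigr => t tD; exact: E.
rewrite [X in _ + X]exchange_big /= -big_split; apply: big1 => s sD.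
rewrite -big_split; apply: big1 => t tD /=; case: ifP => st; last by rewrite addr0.
rewrite Hanti ?addNr //; apply/eqP => est; subst t.
by have := Hirr (DA _ sD); rewrite st.
Qed.

Lemma dd0 (c : {ffun {set J} -> K}) : (forall S, c S != 0 -> S \subset A) -> kdiff F lt (kdiff F lt c) = 0.
Proof.
move=> Hc; apply/ffunP => T; rewrite !ffunE.
case: (boolP (T \subset A)) => TA; last first.
  apply: big1 => s _; rewrite ffunE big1 ?mulr0 // => t _.
  case: (eqVneq (c (t |: (s |: T))) 0) => [->|/Hc H]; first by rewrite mulr0.
  exfalso; move/negP: TA; apply; apply: (subset_trans _ H).
  apply: (subset_trans (subsetUr [set s] T)); apply: subsetUr.
pose g s t := (-1) ^+ kidx lt (s |: T) s *
   ((-1) ^+ kidx lt (t |: (s |: T)) t * c (t |: (s |: T))).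
have E : forall s, s \in A :\: T ->
   (-1) ^+ kidx lt (s |: T) s * kdiff F lt c (s |: T) =
   \sum_(t in A :\: T) (if t != s then g s t else 0).
  move=> s sD; rewrite ffunE mulr_sumr big_mkcond [RHS]big_mkcond.
  apply: eq_bigr => t _; rewrite !in_setD in_setU1 negb_or.
  by case: (t == s); case: (t \in T); case: (t \in A).
rewrite (eq_bigr _ E); apply: pair_sum0; first exact: subsetDl.
move=> s t; rewrite !in_setD => /andP[sT sA] /andP[tT tA] st.
have sTt : s \notin t |: T by rewrite in_setU1 negb_or st sT.
have tTs : t \notin s |: T by rewrite in_setU1 negb_or eq_sym st tT.
rewrite /g (kidxU1 _ sTt) (kidxU1 _ tTs) !(kidxU1 _ sT) !(kidxU1 _ tT).
rewrite (negbTE (Hirr sA)) (negbTE (Hirr tA)) !add0n setUCA.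
have := Htot sA tA st => /orP[lst|lst].
  rewrite lst (negbTE (asym sA tA lst)) /= !exprD expr1 expr0; ring.
rewrite lst (negbTE (asym tA sA lst)) /= !exprD expr1 expr0; ring.
Qed.

Lemma kaugE (z : {ffun {set J} -> K}) : kaug F z = kdiff F lt z set0.
Proof.
rewrite /kaug ffunE setD0; apply: eq_bigr => s sA.
rewrite setU0 kidx0 ?expr0 ?mul1r // => u; rewrite inE => /eqP ->; exact: Hirr.
Qed.

Lemma chain_supp n b (c : {ffun {set J} -> K}) :
  kchain F n b c -> forall S, c S != 0 -> S \subset A.
Proof.
move/kchainP => H S /H [Sb _]; apply: subset_trans Sb _.
by apply/subsetP => x /AbA.
Qed.

Lemma part4 b c : kchain F 1 b c -> kaug F (kdiff F lt c) = 0.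
Proof.
by move=> Hc; rewrite kaugE (dd0 (chain_supp Hc)) ffunE.
Qed.

Lemma part5 n b c : kchain F n.+2 b c -> kdiff F lt (kdiff F lt c) = 0.
Proof. by move=> Hc; rewrite (dd0 (chain_supp Hc)). Qed.

Lemma aug_diff0 b z : kchain F 0 b z -> kaug F z = 0 -> kdiff F lt z = 0.
Proof.
move=> Hz Ha; apply/ffunP => T; rewrite [RHS]ffunE.
case: (eqVneq T set0) => [->|TnE]; first by rewrite -kaugE.
rewrite ffunE big1 // => s; rewrite in_setD => /andP[sT _].
case: (eqVneq (z (s |: T)) 0) => [->|]; first by rewrite mulr0.
move/kchainP: Hz => H /H [_]; rewrite cardsU1 sT add1n => [[]] /eqP.
by rewrite cards_eq0 (negbTE TnE).
Qed.

Lemma kdiff0 : kdiff F lt 0 = 0.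
Proof.
by apply/ffunP => T; rewrite !ffunE big1 // => s _; rewrite ffunE mulr0.
Qed.

Lemma exactness n b z : kchain F n b z -> kdiff F lt z = 0 ->
  exists c', kchain F n.+1 b c' /\ kdiff F lt c' = z.
Proof.
move=> Hz0 Hd; have /kchainP Hz := Hz0.
case: (set_0Vmem (Ab b)) => [Ab0 | [v0 Hv0]].
  exists 0; split; first by apply/kchainP => S; rewrite ffunE eqxx.
  rewrite kdiff0; apply/ffunP => S; rewrite ffunE.
  case: (eqVneq (z S) 0) => // /Hz [Sb Sc]; exfalso.
  by move: Sb; rewrite Ab0 subset0 => /eqP S0; rewrite S0 cards0 in Sc.
have [v vAb vmin] := @exists_min _ (mem (Ab b)) lt
   (fun x xA => Hirr (AbA xA))
   (fun x y w xA yA wA => Htr (AbA xA) (AbA yA) (AbA wA)) _ Hv0.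
have {}vAb : v \in Ab b := vAb.
have {}vmin : forall u, u \in Ab b -> ~~ lt u v := vmin.
have vA := AbA vAb.
have vlt : forall s, s \in Ab b -> s != v -> lt v s.
  move=> s sAb snv; have := Htot (AbA sAb) vA snv => /orP[svl|//].
  by have := vmin s sAb; rewrite svl.
have kv0 : forall X : {set J}, X \subset Ab b -> kidx lt X v = 0%N.
  by move=> X /subsetP XA; apply: kidx0 => u /XA; apply: vmin.
exists [ffun U : {set J} => if v \in U then z (U :\ v) else 0]; split.
  apply/kchainP => U; rewrite ffunE; case: ifP => [vU|]; last by rewrite eqxx.
  move=> /Hz [Sb Sc]; rewrite -(setD1K vU); split.
    by rewrite subUset sub1set vAb Sb.
  by rewrite cardsU1 !inE eqxx /= Sc.
apply/ffunP => T; rewrite ffunE.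
case: (boolP (v \in T)) => vT.
  have vT' : v \notin T :\ v by rewrite !inE eqxx.
  have HT : T = v |: (T :\ v) by rewrite setD1K.
  have := congr1 (fun f : {ffun {set J} -> K} => f (T :\ v)) Hd; rewrite !ffunE /=.
  rewrite (bigD1 v) /=; last by rewrite in_setD vT' vA.
  rewrite -HT.
  have -> : (-1) ^+ kidx lt T v * z T = z T.
    case: (eqVneq (z T) 0) => [->|/Hz [Tb _]]; first by rewrite !mulr0.
    by rewrite kv0 ?expr0 ?mul1r.
  move/eqP; rewrite addr_eq0 => /eqP ->.
  rewrite -sumrN.
  rewrite [RHS](eq_bigl (fun s => s \in A :\: T)); last first.
    move=> s; rewrite !in_setD in_set1.
    by case: (eqVneq s v) => [->|] /=; rewrite ?vT ?andbF ?andbT.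
  apply: eq_bigr => s; rewrite in_setD => /andP[sT sA].
  have snv : s != v by apply: contraNneq sT => ->.
  rewrite ffunE in_setU1 vT orbT.
  have -> : (s |: T) :\ v = s |: (T :\ v).
    apply/setP => u; rewrite !inE; case: (eqVneq u v) => [->|] //=.
    by rewrite eq_sym (negbTE snv).
  case: (eqVneq (z (s |: (T :\ v))) 0) => [->|/Hz [Sb _]].
    by rewrite !mulr0 oppr0.
  have sAb : s \in Ab b by apply: (subsetP Sb); apply: setU11.
  have vsT : v \notin s |: (T :\ v) by rewrite in_setU1 negb_or eq_sym snv vT'.
  have -> : s |: T = v |: (s |: (T :\ v)) by rewrite setUCA -HT.
  by rewrite (kidxU1 _ vsT) (vlt s sAb snv) add1n exprS mulN1r mulNr.
rewrite (bigD1 v) /=; last by rewrite in_setD vT vA.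
rewrite big1 ?addr0; last first.
  move=> s /andP[_ snv]; rewrite ffunE in_setU1 (negbTE vT) orbF eq_sym.
  by rewrite (negbTE snv) mulr0.
rewrite ffunE setU11 setU1K // (kidxU1 _ vT) (negbTE (Hirr vA)) add0n.
case: (eqVneq (z T) 0) => [->|/Hz [Tb _]]; first by rewrite !mulr0.
by rewrite kv0 ?expr0 ?mul1r.
Qed.

Lemma surj b (x : K^o) : x \in F b -> exists c, kchain F 0 b c /\ kaug F c = x.
Proof.
move=> xF; case: (eqVneq x 0) => [->|xnz].
  exists 0; split; first by apply/kchainP => S; rewrite ffunE eqxx.
  by rewrite /kaug big1 // => s _; rewrite ffunE.
have Fb : F b != 0%VS.
  by apply/eqP => Fb0; move: xF; rewrite Fb0 memv0 (negbTE xnz).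
have [a /andP[Fa ab] amin] :=
  @exists_min _ [pred a | (F a != 0%VS) && (a <= b)%O] (fun x y => (x < y)%O)
  (fun y _ => negbT (ltxx y)) (fun x y w _ _ _ => @lt_trans _ _ y x w) b
  (introT andP (conj Fb (lexx b))).
have aA : a \in A.
  rewrite /minsupp inE Fa /=; apply/forallP => y; apply/implyP => ya.
  apply/negPn/negP => Fy.
  by have := amin y; rewrite /= Fy (le_trans (ltW ya) ab) ya => /(_ isT).
exists [ffun S => if S == [set a] then x else 0]; split.
  apply/kchainP => S; rewrite ffunE; case: (eqVneq S [set a]) => [-> _|_]; last by rewrite eqxx.
  by rewrite sub1set inE aA ab cards1.
rewrite /kaug (bigD1 a) //= ffunE eqxx big1 ?addr0 // => s /andP[_ sna].
rewrite ffunE; case: eqP => // /setP /(_ s).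
by rewrite !inE eqxx (negbTE sna).
Qed.

End K.

Theorem proposition4p8 (dsp : Order.disp_t) (J : finJoinSemilatticeType dsp)
    (K : fieldType) (F : J -> {vspace K^o}) (lt : rel J) :
  is_subfunctor_const F ->
  {in minsupp F, forall x, ~~ lt x x} ->
  {in minsupp F & minsupp F & minsupp F,
     forall x y z, lt x y -> lt y z -> lt x z} ->
  {in minsupp F &, forall x y, x != y -> lt x y || lt y x} ->
  (forall (n : nat) (b b' : J) c, (b <= b')%O -> kchain F n b c -> kchain F n b' c) /\
  (forall (n : nat) (b : J) c, kchain F n.+1 b c -> kchain F n b (kdiff F lt c)) /\
  (forall (b : J) c, kchain F 0 b c -> (kaug F c : K^o) \in F b) /\
  (forall (b : J) c, kchain F 1 b c -> kaug F (kdiff F lt c) = 0) /\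
  (forall (n : nat) (b : J) c, kchain F n.+2 b c -> kdiff F lt (kdiff F lt c) = 0) /\
  (forall (b : J) (x : K^o), x \in F b ->
     exists c, kchain F 0 b c /\ kaug F c = x) /\
  (forall (b : J) c, kchain F 0 b c -> kaug F c = 0 ->
     exists c', kchain F 1 b c' /\ kdiff F lt c' = c) /\
  (forall (n : nat) (b : J) c, kchain F n.+1 b c -> kdiff F lt c = 0 ->
     exists c', kchain F n.+2 b c' /\ kdiff F lt c' = c).
Proof.
move=> Hsub Hirr Htr Htot.
split; first exact: part1.
split; first exact: part2.
split; first exact: part3.
split; first exact: (part4 Hirr Htr Htot).
split; first exact: (part5 Hirr Htr Htot).
split; first exact: surj.
split.
  move=> b c Hc Ha; apply: (exactness Hirr Htr Htot Hc).
  exact: (aug_diff0 Hirr Hc Ha).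
move=> n b c Hc Hd; exact: (exactness Hirr Htr Htot Hc Hd).
Qed.
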